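(* Let $\Sigma$ be an alphabet and $(C_1,\dots,C_K)$ a graph-induced covering of the full shift $\Sigma^{\mathbb Z}$. Then: (A) it is a memory covering if and only if every graph presentation of it is complete; (B) if it is a memory covering and non-redundant, then every graph presentation of it is complete and deterministic; (C) it is a future covering if and only if every graph presentation of it is co-complete; (D) if it is a future covering and non-redundant, then every graph presentation of it is co-complete and co-deterministic.
   Context: $\Sigma^{\mathbb Z}$: bi-infinite sequences $\bar z=(z_k)_{k\in\mathbb Z}$, shift $\sigma(\bar z)_k=z_{k+1}$. $\bar z^-=(z_k)_{k\le-1}$, $\bar z^+=(z_k)_{k\ge0}$; $\mathrm{Pre}(A)=\{\bar z^-:\bar z\in A\}$, $\mathrm{Post}(A)=\{\bar z^+:\bar z\in A\}$; for $P$ a set of left-infinite and $F$ a set of right-infinite sequences, $P\cdot F=\{\bar z\in\Sigma^{\mathbb Z}:\bar z^-\in P,\ \bar z^+\in F\}$. A labeled graph is $\mathcal G=(S,E)$, $S$ finite, $E\subseteq S\times S\times\Sigma$, every node having an incoming and an outgoing edge. Bi-infinite walk labeled by $\bar z$: $(e_k)_{k\in\mathbb Z}$ with $e_k=(s_k,s_{k+1},z_k)\in E$, starting at $s_0$; $\mathcal Z(\mathcal G)$, $\mathcal Z(\mathcal G,s)$: labels of all bi-infinite walks / of those starting at $s$. A graph-induced covering of $Z$ is a family $(C_1,\dots,C_K)$ for which some graph $\mathcal G$ with nodes $s_1,\dots,s_K$ (a presentation) has $\mathcal Z(\mathcal G)=Z$ and $C_j=\mathcal Z(\mathcal G,s_j)$;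 non-redundant if $C_i\cap C_j=\emptyset$ for $i\ne j$. It is a memory covering if $C_j=\mathrm{Pre}(C_j)\cdot\mathrm{Post}(Z)$ for all $j$, a future covering if $C_j=\mathrm{Pre}(Z)\cdot\mathrm{Post}(C_j)$ for all $j$. A graph is complete if each node has, for each $i\in\Sigma$, at least one outgoing edge labeled $i$; deterministic if at most one; co-complete (resp. co-deterministic) if each node has, for each $i\in\Sigma$, at least (resp. at most) one incoming edge labeled $i$. *)

(* Defs.v *)
From mathcomp Require Import all_boot.
From Stdlib Require Import ZArith.
Set Implicit Arguments. Unset Strict Implicit. Unset Printing Implicit Defensive.
Open Scope Z_scope.

Section Shift.
Variable Sigma : finType.

Definition biseq := Z -> Sigma.
(* left-infinite sequences (z_k)_{k<=-1}, encoded as p n = z_{-(n+1)} *)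
Definition lseq := nat -> Sigma.
Definition rseq := nat -> Sigma.

Definition past (z : biseq) : lseq := fun n => z (- Z.of_nat n - 1).
Definition future (z : biseq) : rseq := fun n => z (Z.of_nat n).

Definition Pre (A : biseq -> Prop) : lseq -> Prop :=
  fun p => exists z, A z /\ past z = p.
Definition Post (A : biseq -> Prop) : rseq -> Prop :=
  fun f => exists z, A z /\ future z = f.
Definition concat (P : lseq -> Prop) (F : rseq -> Prop) : biseq -> Prop :=
  fun z => P (past z) /\ F (future z).

Definition fullshift : biseq -> Prop := fun _ => True.

Definition seteq {T} (A B : T -> Prop) := forall x, A x <-> B x.

(* labeled graph with node set 'I_K: edge s t a  <->  (s,t,a) \in E *)
Record lgraph (K : nat) := LGraph { edge : 'I_K -> 'I_K -> Sigma -> bool }.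

Definition graph_wf K (G : lgraph K) :=
  forall s : 'I_K, (exists t a, edge G t s a) /\ (exists t a, edge G s t a).

Definition walk_from K (G : lgraph K) (z : biseq) (s : 'I_K) :=
  exists st : Z -> 'I_K, st 0 = s /\ forall k, edge G (st k) (st (k + 1)) (z k).

Definition ZG K (G : lgraph K) : biseq -> Prop := fun z => exists s, walk_from G z s.
Definition ZGs K (G : lgraph K) (s : 'I_K) : biseq -> Prop := fun z => walk_from G z s.

Definition presentation K (Zs : biseq -> Prop) (C : 'I_K -> biseq -> Prop) (G : lgraph K) :=
  graph_wf G /\ seteq (ZG G) Zs /\ forall j, seteq (C j) (ZGs G j).

Definition graph_induced_covering K (Zs : biseq -> Prop) (C : 'I_K -> biseq -> Prop) :=
  exists G, presentation Zs C G.

Definition non_redundant K (C : 'I_K -> biseq -> Prop) :=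
  forall i j : 'I_K, i <> j -> forall z, ~ (C i z /\ C j z).

Definition memory_covering K (Zs : biseq -> Prop) (C : 'I_K -> biseq -> Prop) :=
  forall j, seteq (C j) (concat (Pre (C j)) (Post Zs)).

Definition future_covering K (Zs : biseq -> Prop) (C : 'I_K -> biseq -> Prop) :=
  forall j, seteq (C j) (concat (Pre Zs) (Post (C j))).

Definition complete K (G : lgraph K) :=
  forall (s : 'I_K) (a : Sigma), exists t, edge G s t a.
Definition deterministic K (G : lgraph K) :=
  forall (s t1 t2 : 'I_K) (a : Sigma), edge G s t1 a -> edge G s t2 a -> t1 = t2.
Definition cocomplete K (G : lgraph K) :=
  forall (t : 'I_K) (a : Sigma), exists s, edge G s t a.
Definition codeterministic K (G : lgraph K) :=
  forall (t s1 s2 : 'I_K) (a : Sigma), edge G s1 t a -> edge G s2 t a -> s1 = s2.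
End Shift.

(* Main.v *)
Require Import Defs.
From mathcomp Require Import all_boot.
From Stdlib Require Import ZArith Lia IndefiniteDescription FunctionalExtensionality.
Set Implicit Arguments. Unset Strict Implicit.
Open Scope Z_scope.

Lemma rec_path (T : Type) (P : nat -> T -> T -> Prop) :
  (forall n x, exists y, P n x y) -> forall s, exists p : nat -> T, p O = s /\ forall n, P n (p n) (p n.+1).
Proof.
move=> H s.
have [g Hg] := functional_choice (fun (nx : nat * T) y => P nx.1 nx.2 y) (fun nx => H nx.1 nx.2).
pose p := fix f (n : nat) : T := match n with O => s | S m => g (m, f m) end.
exists p; split=> // n. exact: (Hg (n, p n)).
Qed.

Definition fwd_ok (Sigma : finType) K (G : lgraph Sigma K) (z : biseq Sigma) (st : Z -> 'I_K) :=
  forall k, 0 <= k -> edge G (st k) (st (k+1)) (z k).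
Definition bwd_ok (Sigma : finType) K (G : lgraph Sigma K) (z : biseq Sigma) (st : Z -> 'I_K) :=
  forall k, k < 0 -> edge G (st k) (st (k+1)) (z k).

Lemma glue (Sigma : finType) K (G : lgraph Sigma K) z (st1 st2 : Z -> 'I_K) :
  st1 0 = st2 0 -> bwd_ok G z st1 -> fwd_ok G z st2 -> walk_from G z (st2 0).
Proof.
move=> e hb hf. exists (fun k => if (k <? 0) then st1 k else st2 k). split; first done.
move=> k. case: (Z.ltb_spec k 0) => hk.
- case: (Z.ltb_spec (k+1) 0) => hk1; first exact: hb.
  have E : k + 1 = 0 by lia. move: (hb k hk). by rewrite E e.
- case: (Z.ltb_spec (k+1) 0) => hk1; first lia. exact: hf.
Qed.

Lemma glue2 (Sigma : finType) K (G : lgraph Sigma K) zb zf (st1 st2 : Z -> 'I_K) :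
  st1 0 = st2 0 -> bwd_ok G zb st1 -> fwd_ok G zf st2 ->
  walk_from G (fun k => if k <? 0 then zb k else zf k) (st2 0).
Proof.
move=> e hb hf; apply: glue e _ _.
- move=> k hk. have := hb k hk. by case: (Z.ltb_spec k 0) => //; lia.
- move=> k hk. have := hf k hk. by case: (Z.ltb_spec k 0) => //; lia.
Qed.

Lemma past_eq (Sigma : finType) (z z' : biseq Sigma) : past z = past z' -> forall k, k < 0 -> z k = z' k.
Proof.
move=> e k hk. have := f_equal (fun f => f (Z.to_nat (-k-1))) e. rewrite /past /=.
rewrite Z2Nat.id; last lia. by have -> : (- (-k-1) - 1 = k) by lia.
Qed.

Lemma future_eq (Sigma : finType) (z z' : biseq Sigma) : future z = future z' -> forall k, 0 <= k -> z k = z' k.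
Proof.
move=> e k hk. have := f_equal (fun f => f (Z.to_nat k)) e. rewrite /future /=.
by rewrite Z2Nat.id.
Qed.

Lemma fwd_of_nat (Sigma : finType) K (G : lgraph Sigma K) (p : nat -> 'I_K) z :
  (forall n, edge G (p n) (p n.+1) (z (Z.of_nat n))) -> fwd_ok G z (fun k => p (Z.to_nat k)).
Proof.
move=> h k hk /=. have E : Z.to_nat (k+1) = (Z.to_nat k).+1 by lia.
rewrite E. move: (h (Z.to_nat k)). by rewrite Z2Nat.id.
Qed.

Lemma bwd_of_nat (Sigma : finType) K (G : lgraph Sigma K) (p : nat -> 'I_K) z :
  (forall n, edge G (p n.+1) (p n) (z (- Z.of_nat n - 1))) -> bwd_ok G z (fun k => p (Z.to_nat (-k))).
Proof.
move=> h k hk /=. have E : Z.to_nat (-k) = (Z.to_nat (-(k+1))).+1 by lia.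
rewrite E. move: (h (Z.to_nat (-(k+1)))). rewrite Z2Nat.id; last lia.
by have -> : (- - (k+1) - 1 = k) by lia.
Qed.

Lemma complete_fwd (Sigma : finType) K (G : lgraph Sigma K) :
  complete G -> forall z t, exists st, st 0 = t /\ fwd_ok G z st.
Proof.
move=> hc z t.
have [p [p0 hp]] := @rec_path _ (fun n u v => edge G u v (z (Z.of_nat n))) (fun n u => hc u (z (Z.of_nat n))) t.
exists (fun k => p (Z.to_nat k)); split => //. exact: fwd_of_nat.
Qed.

Lemma cocomplete_bwd (Sigma : finType) K (G : lgraph Sigma K) :
  cocomplete G -> forall z t, exists st, st 0 = t /\ bwd_ok G z st.
Proof.
move=> hc z t.
have [p [p0 hp]] := @rec_path _ (fun n u v => edge G v u (z (- Z.of_nat n - 1))) (fun n u => hc u _) t.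
exists (fun k => p (Z.to_nat (-k))); split => //. exact: bwd_of_nat.
Qed.

Lemma wf_fwd (Sigma : finType) K (G : lgraph Sigma K) :
  graph_wf G -> forall t, exists st z, st 0 = t /\ fwd_ok G z st.
Proof.
move=> hw t. have [_ [t' [a _]]] := hw t.
have H : forall (n : nat) (x : ('I_K * Sigma)%type), exists y : ('I_K * Sigma)%type, (fun (_ : nat) (x y : ('I_K * Sigma)%type) => edge G x.1 y.1 y.2) n x y.
  move=> n [u c]; have [_ [v [b hb]]] := hw u; by exists (v, b).
have [p [p0 hp]] := rec_path H (t, a).
exists (fun k => (p (Z.to_nat k)).1), (fun k => (p (Z.to_nat k).+1).2).
split; first by rewrite /= p0.
apply: (@fwd_of_nat _ _ G (fun n => (p n).1)) => n /=. rewrite Nat2Z.id. exact: hp.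
Qed.

Lemma wf_bwd (Sigma : finType) K (G : lgraph Sigma K) :
  graph_wf G -> forall t, exists st z, st 0 = t /\ bwd_ok G z st.
Proof.
move=> hw t. have [[t' [a _]] _] := hw t.
have H : forall (n : nat) (x : ('I_K * Sigma)%type), exists y : ('I_K * Sigma)%type, (fun (_ : nat) (x y : ('I_K * Sigma)%type) => edge G y.1 x.1 y.2) n x y.
  move=> n [u c]; have [[v [b hb]] _] := hw u; by exists (v, b).
have [p [p0 hp]] := rec_path H (t, a).
exists (fun k => (p (Z.to_nat (-k))).1), (fun k => (p (Z.to_nat (-k))).2).
split; first by rewrite /= p0.
apply: (@bwd_of_nat _ _ G (fun n => (p n).1)) => n /=.
have -> : Z.to_nat (- (- Z.of_nat n - 1)) = n.+1 by lia. exact: hp.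
Qed.

Lemma ltb_neg (k : Z) : k < 0 -> (k <? 0) = true.
Proof. by move=> h; apply/Z.ltb_lt. Qed.
Lemma ltb_nn (k : Z) : 0 <= k -> (k <? 0) = false.
Proof. by move=> h; apply/Z.ltb_ge. Qed.

Theorem mainTheorem8 (Sigma : finType) (K : nat) (C : 'I_K -> biseq Sigma -> Prop) :
  graph_induced_covering (@fullshift Sigma) C ->
  (memory_covering (@fullshift Sigma) C <->
     (forall G : lgraph Sigma K, presentation (@fullshift Sigma) C G -> complete G)) /\
  (memory_covering (@fullshift Sigma) C -> non_redundant C ->
     forall G : lgraph Sigma K, presentation (@fullshift Sigma) C G ->
       complete G /\ deterministic G) /\
  (future_covering (@fullshift Sigma) C <->
     (forall G : lgraph Sigma K, presentation (@fullshift Sigma) C G -> cocomplete G)) /\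
  (future_covering (@fullshift Sigma) C -> non_redundant C ->
     forall G : lgraph Sigma K, presentation (@fullshift Sigma) C G ->
       cocomplete G /\ codeterministic G).
Proof.
move=> [G0 hG0].
have memA : memory_covering (@fullshift Sigma) C ->
   forall G : lgraph Sigma K, presentation (@fullshift Sigma) C G -> complete G.
  move=> hm G [hw [_ hC]] s a.
  have [st1 [zb [e1 hb]]] := wf_bwd hw s.
  have [st2 [zf [e2 hf]]] := wf_fwd hw s.
  pose w := fun k => if k <? 0 then zb k else zf k.
  have hwC : C s w by apply/hC; rewrite -e2; apply: (@glue2 _ _ G zb zf st1 st2) => //; by rewrite e1 e2.
  pose z := fun k => if k <? 0 then zb k else a.
  have : C s z.
    apply/(hm s z); split; last by exists z.
    exists w; split => //. apply: functional_extensionality => n.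
    by rewrite /past /w /z ltb_neg //; lia.
  move/hC => [st [e hst]]. exists (st 1). rewrite -e. exact: (hst 0).
have futC : future_covering (@fullshift Sigma) C ->
   forall G : lgraph Sigma K, presentation (@fullshift Sigma) C G -> cocomplete G.
  move=> hm G [hw [_ hC]] s a.
  have [st1 [zb [e1 hb]]] := wf_bwd hw s.
  have [st2 [zf [e2 hf]]] := wf_fwd hw s.
  pose w := fun k => if k <? 0 then zb k else zf k.
  have hwC : C s w by apply/hC; rewrite -e2; apply: (@glue2 _ _ G zb zf st1 st2) => //; by rewrite e1 e2.
  pose z := fun k => if k <? 0 then a else zf k.
  have : C s z.
    apply/(hm s z); split; first by exists z.
    exists w; split => //. apply: functional_extensionality => n.
    by rewrite /future /w /z ltb_nn //; lia.
  move/hC => [st [e hst]]. exists (st (-1)). move: (hst (-1)).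
  by rewrite (_ : -1 + 1 = 0) // e.
split; [split|split; [|split; [split|]]].
- exact: memA.
- move=> hall j z; split.
    move=> hz; split; [by exists z | by exists z].
  have hc := hall G0 hG0; case: hG0 => [hw [_ hC]].
  move=> [[w [hwj ew]] _]. have [st [e hst]] := proj1 (hC j w) hwj.
  have [st2 [e2 hf]] := complete_fwd hc z j.
  apply/hC. rewrite /ZGs -e2. apply: (@glue _ _ G0 z st st2); first by rewrite e e2.
    move=> k hk. rewrite -(past_eq ew hk). exact: hst.
  exact: hf.
- move=> hm hnr G hp; split; first exact: memA hm G hp.
  case: hp => [hw [_ hC]]. move=> s t1 t2 a h1 h2. case: (eqVneq t1 t2) => // ne; exfalso.
  have [st [zb [e hb]]] := wf_bwd hw s.
  pose z1 := fun k => if k =? -1 then a else zb (k+1).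
  have mk : forall t, edge G s t a -> exists u, C t u /\ forall k, k < 0 -> u k = z1 k.
    move=> t ht. have [st2 [zf [e2 hf]]] := wf_fwd hw t.
    exists (fun k => if k <? 0 then z1 k else zf k); split; last by move=> k hk; rewrite ltb_neg.
    apply/hC. rewrite /ZGs -e2.
    apply: (@glue2 _ _ G z1 zf (fun k => if k =? 0 then t else st (k+1)) st2) => //; try by rewrite e2.
    move=> k hk /=. rewrite /z1. case: (Z.eqb_spec k (-1)) => hk1.
      subst k. rewrite /= e. exact ht.
    rewrite (_ : (k =? 0) = false); last by apply/Z.eqb_neq; lia.
    rewrite (_ : (k+1 =? 0) = false); last by apply/Z.eqb_neq; lia.
    apply: hb; lia.
  have [u1 [hu1 e1]] := mk t1 h1; have [u2 [hu2 e2]] := mk t2 h2.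
  have ne' : t1 <> t2 by apply/eqP.
  apply: (hnr _ _ ne' u1); split => //. apply/(hm t2 u1); split; last by exists u1.
  exists u2; split => //. apply: functional_extensionality => n.
  have h : - Z.of_nat n - 1 < 0 by lia. by rewrite /past e1 // e2.
- exact: futC.
- move=> hall j z; split.
    move=> hz; split; [by exists z | by exists z].
  have hc := hall G0 hG0; case: hG0 => [hw [_ hC]].
  move=> [_ [w [hwj ew]]]. have [st [e hst]] := proj1 (hC j w) hwj.
  have [st1 [e1 hb]] := cocomplete_bwd hc z j.
  apply/hC. rewrite /ZGs -e. apply: (@glue _ _ G0 z st1 st); first by rewrite e e1.
    exact: hb.
  move=> k hk; rewrite -(future_eq ew hk); exact: hst.
- move=> hm hnr G hp; split; first exact: futC hm G hp.
  case: hp => [hw [_ hC]]. move=> t s1 s2 a h1 h2. case: (eqVneq s1 s2) => // ne; exfalso.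
  have [st [zf [e hf]]] := wf_fwd hw t.
  pose z2 := fun k => if k =? 0 then a else zf (k-1).
  have mk : forall s, edge G s t a -> exists u, C s u /\ forall k, 0 <= k -> u k = z2 k.
    move=> s hs. have [st1 [zb [e1 hb]]] := wf_bwd hw s.
    exists (fun k => if k <? 0 then zb k else z2 k); split; last by move=> k hk; rewrite ltb_nn.
    apply/hC. rewrite /ZGs.
    apply: (@glue2 _ _ G zb z2 st1 (fun k => if k =? 0 then s else st (k-1))) => //; try by rewrite e1.
    move=> k hk /=. rewrite /z2. case: (Z.eqb_spec k 0) => hk0.
      subst k. rewrite /= e. exact hs.
    rewrite (_ : (k+1 =? 0) = false); last by apply/Z.eqb_neq; lia.
    have hh := hf (k-1) ltac:(lia).
    rewrite (_ : k+1-1 = k-1+1) //; lia.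
  have [u1 [hu1 e1]] := mk s1 h1; have [u2 [hu2 e2]] := mk s2 h2.
  have ne' : s1 <> s2 by apply/eqP.
  apply: (hnr _ _ ne' u1); split => //. apply/(hm s2 u1); split; first by exists u1.
  exists u2; split => //. apply: functional_extensionality => n.
  have h : 0 <= Z.of_nat n by lia. by rewrite /future e1 // e2.
Qed.
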